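(* For $A\in\mathbb{R}^{m\times N}$ and $K\subseteq[N]$ the following are equivalent: (i) every $x_0\in\{0,1\}^N$ with $\operatorname{supp}x_0\subseteq K$ is the unique solution of $(P_{\mathrm{bin}})$ with $b=Ax_0$; (ii) every $x_0\in[0,1]^N$ with $\operatorname{supp}x_0\subseteq K$ is the unique solution of $(P_{\mathrm{bin}})$ with $b=Ax_0$; (iii) $\ker(A)\cap N^+\cap H_K^+=\{0\}$, where $H^+_K=\{w\in\mathbb{R}^N: w_i\ge 0 \text{ for } i\in [N]\setminus K\}$ and $N^+=\{w\in\mathbb{R}^N: \sum_{i=1}^N w_i\le 0\}$.
   Context: $[N]=\{1,\dots,N\}$. $(P_{\mathrm{bin}})$ is the program $\min\|x\|_1$ subject to $Ax=b$ and $x\in[0,1]^N$; ''unique solution'' means unique minimizer. *)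

(* Defs.v *)
From mathcomp Require Import all_boot all_order all_algebra.
From mathcomp Require Import reals.
Set Implicit Arguments. Unset Strict Implicit. Unset Printing Implicit Defensive.
Import Order.TTheory GRing.Theory Num.Theory.
Local Open Scope ring_scope.

Section Defs.
Variables (R : realType) (m N : nat).

Definition l1norm (x : 'cV[R]_N) : R := \sum_(i < N) `|x i 0|.

Definition in_unit_box (x : 'cV[R]_N) : Prop := forall i, 0 <= x i 0 <= 1.

Definition is_binary (x : 'cV[R]_N) : Prop := forall i, x i 0 = 0 \/ x i 0 = 1.

Definition supp_sub (x : 'cV[R]_N) (K : {set 'I_N}) : Prop :=
  forall i, x i 0 != 0 -> i \in K.

Definition Pbin_feasible (A : 'M[R]_(m, N)) (b : 'cV[R]_m) (x : 'cV[R]_N) : Prop :=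
  A *m x = b /\ in_unit_box x.

Definition Pbin_minimizer (A : 'M[R]_(m, N)) (b : 'cV[R]_m) (x : 'cV[R]_N) : Prop :=
  Pbin_feasible A b x /\ forall y, Pbin_feasible A b y -> l1norm x <= l1norm y.

Definition Pbin_unique_solution (A : 'M[R]_(m, N)) (b : 'cV[R]_m) (x : 'cV[R]_N) : Prop :=
  Pbin_minimizer A b x /\ forall y, Pbin_minimizer A b y -> y = x.

Definition HKplus (K : {set 'I_N}) (w : 'cV[R]_N) : Prop :=
  forall i, i \notin K -> 0 <= w i 0.

Definition Nplus (w : 'cV[R]_N) : Prop := \sum_(i < N) w i 0 <= 0.

End Defs.

(* Main.v *)
Require Import Defs.
From mathcomp Require Import all_boot all_order all_algebra.
From mathcomp Require Import reals.
From mathcomp Require Import lra.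
Import Order.TTheory GRing.Theory Num.Theory.
Local Open Scope ring_scope.

Lemma l1_box (R : realType) (N : nat) (x : 'cV[R]_N) :
  in_unit_box x -> l1norm x = \sum_(i < N) x i 0.
Proof.
move=> hb; rewrite /l1norm; apply: eq_bigr => i _.
by rewrite ger0_norm //; case/andP: (hb i).
Qed.

Lemma step32 (R : realType) (m N : nat) (A : 'M[R]_(m, N)) (K : {set 'I_N}) :
  (forall w : 'cV[R]_N, A *m w = 0 -> Nplus w -> HKplus K w -> w = 0) ->
  (forall x0 : 'cV[R]_N, in_unit_box x0 -> supp_sub x0 K ->
          Pbin_unique_solution A (A *m x0) x0).
Proof.
move=> H3 x0 hb hs.
have key : forall y, Pbin_feasible A (A *m x0) y ->
    \sum_(i < N) x0 i 0 < \sum_(i < N) y i 0 \/ y = x0.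
  move=> y [hAy hy]; set w := y - x0.
  have Aw : A *m w = 0 by rewrite /w mulmxBr hAy subrr.
  have Hk : HKplus K w.
    move=> i hi; rewrite /w !mxE.
    have -> : x0 i 0 = 0.
      by apply/eqP; apply/negPn/negP => /hs; rewrite (negbTE hi).
    by rewrite subr0; case/andP: (hy i).
  have sw : \sum_(i < N) w i 0 = \sum_(i < N) y i 0 - \sum_(i < N) x0 i 0.
    by rewrite -sumrB; apply: eq_bigr => i _; rewrite /w !mxE.
  case: (lerP (\sum_(i < N) w i 0) 0) => hw.
    right; have := H3 w Aw hw Hk; rewrite /w => /eqP; rewrite subr_eq0.
    by move/eqP.
  by left; rewrite sw subr_gt0 in hw.
have fx0 : Pbin_feasible A (A *m x0) x0 by [].
split; first split => //.
  move=> y fy; rewrite !l1_box //; last by case: fy.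
  by case: (key y fy) => [/ltW|->].
move=> y [fy miny]; case: (key y fy) => // hlt.
have := miny x0 fx0; rewrite !l1_box //; last by case: fy.
by rewrite leNgt hlt.
Qed.

Lemma step21 (R : realType) (m N : nat) (A : 'M[R]_(m, N)) (K : {set 'I_N}) :
  (forall x0 : 'cV[R]_N, in_unit_box x0 -> supp_sub x0 K ->
          Pbin_unique_solution A (A *m x0) x0) ->
  (forall x0 : 'cV[R]_N, is_binary x0 -> supp_sub x0 K ->
          Pbin_unique_solution A (A *m x0) x0).
Proof.
move=> H x0 hb; apply: H => i; case: (hb i) => ->; rewrite ?lexx ?ler01 //.
Qed.

Lemma step13 (R : realType) (m N : nat) (A : 'M[R]_(m, N)) (K : {set 'I_N}) :
  (forall x0 : 'cV[R]_N, is_binary x0 -> supp_sub x0 K ->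
          Pbin_unique_solution A (A *m x0) x0) ->
  (forall w : 'cV[R]_N, A *m w = 0 -> Nplus w -> HKplus K w -> w = 0).
Proof.
move=> H1 w Aw Nw Hw.
pose x0 : 'cV[R]_N := \col_i (if (i \in K) && (w i 0 < 0) then 1 else 0).
pose s := \sum_(i < N) `|w i 0| + 1.
have s0 : 0 < s.
  have : 0 <= \sum_(i < N) `|w i 0| by apply: sumr_ge0 => i _.
  rewrite /s; lra.
pose t := s^-1.
have t0 : 0 < t by rewrite /t invr_gt0.
have bnd : forall i, - 1 < t * w i 0 < 1.
  move=> i; rewrite -ltr_norml normrM (gtr0_norm t0) mulrC /t ltr_pdivrMr //.
  rewrite mul1r /s (bigD1 i) //=.
  have : 0 <= \sum_(j < N | j != i) `|w j 0| by apply: sumr_ge0.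
  lra.
have hbin : is_binary x0 by move=> i; rewrite mxE; case: ifP => _; [right|left].
have hsupp : supp_sub x0 K.
  by move=> i; rewrite mxE; case: ifP => [/andP[]//|]; rewrite eqxx.
have [[fx0 minx0] uniq] := H1 x0 hbin hsupp.
pose y := x0 + t *: w.
have fy : Pbin_feasible A (A *m x0) y.
  split; first by rewrite /y mulmxDr -scalemxAr Aw scaler0 addr0.
  move=> i; rewrite /y !mxE.
  have := bnd i.
  case: ifP => hK.
    case/andP: hK => _ hw.
    have : t * w i 0 < 0 by rewrite pmulr_rlt0.
    move=> h /andP[h1 h2]; apply/andP; split; lra.
  have : 0 <= t * w i 0.
    rewrite pmulr_rge0 //.
    case hi : (i \in K).
      by move: hK; rewrite hi /= => /negbT; rewrite -leNgt.
    by apply: Hw; rewrite hi.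
  move=> h /andP[h1 h2]; apply/andP; split; lra.
have ybox : in_unit_box y by case: fy.
have x0box : in_unit_box x0 by case: fx0.
have ly : l1norm y <= l1norm x0.
  rewrite !l1_box //.
  have -> : \sum_(i < N) y i 0 = \sum_(i < N) x0 i 0 + t * \sum_(i < N) w i 0.
    by rewrite mulr_sumr -big_split; apply: eq_bigr => i _; rewrite /y !mxE.
  have : t * \sum_(i < N) w i 0 <= 0 by rewrite pmulr_rle0.
  lra.
have := uniq y; rewrite /y => hy.
have : x0 + t *: w = x0 + 0.
  rewrite addr0; apply: hy; split => // z fz.
  exact: le_trans ly (minx0 z fz).
move/addrI/eqP; rewrite scaler_eq0 => /orP[|/eqP //].
by rewrite (negbTE (lt0r_neq0 t0)).
Qed.

Theorem theorem2p6 (R : realType) (m N : nat) (A : 'M[R]_(m, N)) (K : {set 'I_N}) :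
  [/\ ((forall x0 : 'cV[R]_N, is_binary x0 -> supp_sub x0 K ->
          Pbin_unique_solution A (A *m x0) x0) <->
       (forall x0 : 'cV[R]_N, in_unit_box x0 -> supp_sub x0 K ->
          Pbin_unique_solution A (A *m x0) x0)),
      ((forall x0 : 'cV[R]_N, in_unit_box x0 -> supp_sub x0 K ->
          Pbin_unique_solution A (A *m x0) x0) <->
       (forall w : 'cV[R]_N, A *m w = 0 -> Nplus w -> HKplus K w -> w = 0))
    & ((forall x0 : 'cV[R]_N, is_binary x0 -> supp_sub x0 K ->
          Pbin_unique_solution A (A *m x0) x0) <->
       (forall w : 'cV[R]_N, A *m w = 0 -> Nplus w -> HKplus K w -> w = 0))].
Proof.
have h13 := @step13 R m N A K; have h32 := @step32 R m N A K;
have h21 := @step21 R m N A K.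
split; split; auto.
Qed.
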